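(* Assume $K$ is a perfect $A$-field. Let $\Phi$ and $\Psi$ be $\mathbf t$-modules over $K$. Then there is an isomorphism of $\mathbb F_q[t]$-modules $$\operatorname{Ext}^1_\tau(\Phi,\Psi)\cong\operatorname{Ext}^1_\sigma(\Psi^\sigma,\Phi^\sigma).$$
   Context: $A=\mathbb F_q[t]$; $K$ a perfect field of characteristic $p$ with $\mathbb F_q$-algebra map $\iota:A\to K$, $\theta=\iota(t)$. $K\{\tau\}$: twisted polynomials with $\tau x=x^q\tau$; $K\{\sigma\}$: twisted polynomials with $\sigma x=x^{(-1)}\sigma$, where $c^{(-k)}=c^{q^{-k}}$ and $c^{(k)}=c^{q^k}$. A $\mathbf t$-module of dimension $d$ is an $\mathbb F_q$-algebra homomorphism $\Phi:\mathbb F_q[t]\to\mathrm{Mat}_d(K\{\tau\})$ with $\Phi_t=(\theta I+N)+\sum_{i\ge1}M_i\tau^i$, $N$ nilpotent; a $\mathbf t^\sigma$-module is defined identically with $\sigma$ in place of $\tau$. Define $(-)^\sigma:K\{\tau\}\to K\{\sigma\}$ by $(\sum a_i\tau^i)^\sigma=\sum a_i^{(-i)}\sigma^i$, and for a $\mathbf t$-module $\Phi$ of dimension $d$ let $\Phi^\sigma:\mathbb F_q[t]\to\mathrm{Mat}_d(K\{\sigma\})$ be given by $\Phi^\sigma_a=$ the transpose of the matrix obtained by applying $(-)^\sigma$ entrywise to $\Phi_a$ (a $\mathbf t^\sigma$-module). For $\mathbf t$-modules (resp. $\mathbf t^\sigma$-modules) $\Phi$ of dim $d$, $\Psi$ of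 dim $e$: $\mathrm{Der}(\Phi,\Psi)$ is the space of $\mathbb F_q$-linear $\delta:\mathbb F_q[t]\to\mathrm{Mat}_{e\times d}(K\{\tau\})$ (resp. $K\{\sigma\}$) with $\delta(ab)=\Psi_a\delta(b)+\delta(a)\Phi_b$; inner biderivations are $\delta^{(U)}(a)=U\Phi_a-\Psi_aU$; $\operatorname{Ext}^1_\tau(\Phi,\Psi)$ (resp. $\operatorname{Ext}^1_\sigma(\Phi,\Psi)$) is $\mathrm{Der}(\Phi,\Psi)/\mathrm{Der}_{in}(\Phi,\Psi)$ with $\mathbb F_q[t]$-module structure $a*[\delta]=[\Psi_a\delta]$ (equivalently $[\delta\Phi_a]$); it is the group of extensions of $\Phi$ by $\Psi$ in the respective category. *)

(* Defs.v *)
From HB Require Import structures.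
From mathcomp Require Import all_boot all_order all_algebra.
From Stdlib Require Import ClassicalEpsilon.
Set Implicit Arguments. Unset Strict Implicit. Unset Printing Implicit Defensive.
Import GRing.Theory.
Local Open Scope ring_scope.

Definition perfect_field (K : fieldType) : Prop :=
  forall p : nat, p \in [pchar K] -> forall y : K, exists x : K, x ^+ p = y.

(* q-Frobenius  c |-> c^(1) = c^q  and its inverse  c |-> c^(-1) (exists when K perfect). *)
Definition frob (K : fieldType) (q : nat) (x : K) : K := x ^+ q.
Definition frobinv (K : fieldType) (q : nat) (y : K) : K :=
  epsilon (inhabits (0 : K)) (fun x : K => x ^+ q = y).

(* Twisted polynomials K{phi}: an element sum_i a_i X^i of {poly K} stands for
   sum_i a_i tau^i; multiplication uses  X x = phi(x) X, i.e.
   (sum a_i X^i)(sum b_j X^j) = sum a_i phi^i(b_j) X^(i+j).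
   phi = frob q gives K{tau}; phi = frobinv q gives K{sigma}. *)
Definition tmul (K : fieldType) (phi : K -> K) (a b : {poly K}) : {poly K} :=
  \sum_(i < size a) \sum_(j < size b) (a`_i * iter i phi b`_j) *: 'X^(i + j).

Definition tmulmx (K : fieldType) (phi : K -> K) (m n p : nat)
  (A : 'M[{poly K}]_(m, n)) (B : 'M[{poly K}]_(n, p)) : 'M[{poly K}]_(m, p) :=
  \matrix_(i, k) \sum_j tmul phi (A i j) (B j k).

(* A = F_q[t] = {poly Fq}; the F_q-structure of K is f : Fq -> K;
   iota : A -> K is the F_q-algebra map with iota(t) = theta. *)

(* t-module (phi = frob q) / t^sigma-module (phi = frobinv q) of dimension d *)
Definition is_tmodule (Fq : finFieldType) (K : fieldType) (f : {rmorphism Fq -> K})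
  (phi : K -> K) (theta : K) (d : nat) (Phi : {poly Fq} -> 'M[{poly K}]_d) : Prop :=
  [/\ (forall (c : Fq) (a b : {poly Fq}), Phi (c *: a + b) = (f c)%:P *: Phi a + Phi b),
      Phi 1 = 1%:M,
      (forall a b : {poly Fq}, Phi (a * b) = tmulmx phi (Phi a) (Phi b)) &
      exists k : nat,
        iter k (mulmx (map_mx (fun x : {poly K} => x`_0) (Phi 'X) - theta%:M)) 1%:M = 0].

Definition is_der (Fq : finFieldType) (K : fieldType) (f : {rmorphism Fq -> K})
  (phi : K -> K) (d e : nat) (Phi : {poly Fq} -> 'M[{poly K}]_d)
  (Psi : {poly Fq} -> 'M[{poly K}]_e) (delta : {poly Fq} -> 'M[{poly K}]_(e, d)) : Prop :=
  (forall (c : Fq) (a b : {poly Fq}), delta (c *: a + b) = (f c)%:P *: delta a + delta b)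
  /\ (forall a b : {poly Fq},
        delta (a * b) = tmulmx phi (Psi a) (delta b) + tmulmx phi (delta a) (Phi b)).

Definition is_inner (Fq : finFieldType) (K : fieldType)
  (phi : K -> K) (d e : nat) (Phi : {poly Fq} -> 'M[{poly K}]_d)
  (Psi : {poly Fq} -> 'M[{poly K}]_e) (delta : {poly Fq} -> 'M[{poly K}]_(e, d)) : Prop :=
  exists U : 'M[{poly K}]_(e, d),
    forall a, delta a = tmulmx phi U (Phi a) - tmulmx phi (Psi a) U.

Definition to_sigma (K : fieldType) (q : nat) (p : {poly K}) : {poly K} :=
  \poly_(i < size p) iter i (frobinv q) p`_i.

Definition sigma_mod (Fq : finFieldType) (K : fieldType) (q d : nat)
  (Phi : {poly Fq} -> 'M[{poly K}]_d) : {poly Fq} -> 'M[{poly K}]_d :=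
  fun a => (map_mx (to_sigma q) (Phi a))^T.

(* F : Der(Phi1,Psi1) -> Der(Phi2,Psi2) induces an isomorphism of F_q[t]-modules
   Ext^1(Phi1,Psi1) = Der/Der_in  -->  Ext^1(Phi2,Psi2) = Der/Der_in,
   with a * [delta] = [Psi_a delta]:  the induced map on classes is well defined,
   additive, F_q[t]-linear, injective and surjective. *)
Definition ext_iso (Fq : finFieldType) (K : fieldType) (f : {rmorphism Fq -> K})
  (phi1 : K -> K) (d1 e1 : nat) (Phi1 : {poly Fq} -> 'M[{poly K}]_d1)
  (Psi1 : {poly Fq} -> 'M[{poly K}]_e1)
  (phi2 : K -> K) (d2 e2 : nat) (Phi2 : {poly Fq} -> 'M[{poly K}]_d2)
  (Psi2 : {poly Fq} -> 'M[{poly K}]_e2)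
  (F : ({poly Fq} -> 'M[{poly K}]_(e1, d1)) -> ({poly Fq} -> 'M[{poly K}]_(e2, d2)))
  : Prop :=
  let D1 := is_der f phi1 Phi1 Psi1 in
  let D2 := is_der f phi2 Phi2 Psi2 in
  let I1 := is_inner phi1 Phi1 Psi1 in
  let I2 := is_inner phi2 Phi2 Psi2 in
  [/\ (forall delta, D1 delta -> D2 (F delta)),
      (forall delta1 delta2, D1 delta1 -> D1 delta2 ->
         I2 (fun a => F (fun b => delta1 b + delta2 b) a - F delta1 a - F delta2 a)),
      (forall (c : {poly Fq}) delta, D1 delta ->
         I2 (fun a => F (fun b => tmulmx phi1 (Psi1 c) (delta b)) a
                      - tmulmx phi2 (Psi2 c) (F delta a))),
      (forall delta, D1 delta -> (I2 (F delta) <-> I1 delta)) &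
      (forall eta, D2 eta -> exists delta, D1 delta /\ I2 (fun a => F delta a - eta a))].

(* Main.v *)
Require Import Defs.
From HB Require Import structures.
From mathcomp Require Import all_boot all_order all_algebra all_field.
From Stdlib Require Import ClassicalEpsilon.
Set Implicit Arguments. Unset Strict Implicit. Unset Printing Implicit Defensive.
Import GRing.Theory.
Local Open Scope ring_scope.

Record pairP (K : fieldType) (phi psi : K -> K) : Prop := PairP {
  psiD : forall x y, psi (x + y) = psi x + psi y;
  psiM : forall x y, psi (x * y) = psi x * psi y;
  phiD : forall x y, phi (x + y) = phi x + phi y;
  phiM : forall x y, phi (x * y) = phi x * phi y;
  psiK : cancel psi phi;
  phiK : cancel phi psi }.

Lemma pair_sym (K : fieldType) (phi psi : K -> K) : pairP phi psi -> pairP psi phi.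
Proof. by case=> *; split. Qed.

Lemma g0 (K : fieldType) (g : K -> K) : (forall x y, g (x + y) = g x + g y) -> g 0 = 0.
Proof. by move=> gD; apply: (@addIr _ (g 0)); rewrite -gD !add0r. Qed.

Lemma iterD' (K : fieldType) (g : K -> K) n : (forall x y, g (x + y) = g x + g y) ->
  forall x y, iter n g (x + y) = iter n g x + iter n g y.
Proof. by move=> gD; elim: n => //= n IH x y; rewrite IH gD. Qed.

Lemma iterM' (K : fieldType) (g : K -> K) n : (forall x y, g (x * y) = g x * g y) ->
  forall x y, iter n g (x * y) = iter n g x * iter n g y.
Proof. by move=> gM; elim: n => //= n IH x y; rewrite IH gM. Qed.

Lemma iter0' (K : fieldType) (g : K -> K) n : (forall x y, g (x + y) = g x + g y) ->
  iter n g 0 = 0.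
Proof. by move=> gD; elim: n => //= n ->; apply: g0. Qed.

Lemma iterN' (K : fieldType) (g : K -> K) n : (forall x y, g (x + y) = g x + g y) ->
  forall x, iter n g (- x) = - iter n g x.
Proof.
move=> gD x; apply/eqP; rewrite -addr_eq0 -iterD' // addNr iter0' //.
Qed.

Lemma iter_sum (K : fieldType) (g : K -> K) n (I : Type) (r : seq I) (P : pred I) (F : I -> K) :
  (forall x y, g (x + y) = g x + g y) ->
  iter n g (\sum_(i <- r | P i) F i) = \sum_(i <- r | P i) iter n g (F i).
Proof.
move=> gD; apply: (big_morph (iter n g)); [exact: iterD' | exact: iter0'].
Qed.

Lemma iter_fix (K : fieldType) (g : K -> K) n c : g c = c -> iter n g c = c.
Proof. by move=> gc; elim: n => //= n ->. Qed.

Lemma iterK' (K : fieldType) (phi psi : K -> K) n : cancel psi phi ->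
  cancel (iter n psi) (iter n phi).
Proof. by move=> hK; elim: n => // n IH x; rewrite [iter _.+1 psi _]iterSr /= IH hK. Qed.

Lemma iter_comp (K : fieldType) (phi psi : K -> K) k i x : cancel phi psi -> (i <= k)%N ->
  iter k psi (iter i phi x) = iter (k - i) psi x.
Proof.
by move=> hK hik; rewrite -{1}(subnK hik) iterD (iterK' _ hK).
Qed.

Definition conv (K : fieldType) (psi : K -> K) (p : {poly K}) : {poly K} :=
  \poly_(i < size p) iter i psi p`_i.

Lemma coef_conv (K : fieldType) (psi : K -> K) p i :
  (forall x y, psi (x + y) = psi x + psi y) ->
  (conv psi p)`_i = iter i psi p`_i.
Proof.
move=> gD; rewrite coef_poly; case: ltnP => // h.
by rewrite nth_default // iter0'.
Qed.

Lemma widen_sum (V : zmodType) n N (F : nat -> V) : (n <= N)%N ->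
  (forall i, (n <= i)%N -> F i = 0) -> \sum_(i < n) F i = \sum_(i < N) F i.
Proof.
move=> hnN hF; rewrite -(subnKC hnN) big_split_ord /= [X in _ = _ + X]big1 ?addr0 // => i _.
by apply: hF; rewrite leq_addr.
Qed.

Lemma coef_tmul (K : fieldType) (phi : K -> K) a b k :
  (forall x y, phi (x + y) = phi x + phi y) ->
  (tmul phi a b)`_k = \sum_(i < k.+1) a`_i * iter i phi b`_(k - i).
Proof.
move=> gD.
have inner (i : nat) : \sum_(j < size b) (a`_i * iter i phi b`_j) *: 'X^(i + j)
    = (a`_i *: 'X^i) * \poly_(j < size b) iter i phi b`_j.
  rewrite poly_def big_distrr; apply: eq_bigr => j _ /=.
  by rewrite -scalerAl -scalerAr scalerA exprD.
pose G i := a`_i * (if (k < i)%N then 0 else iter i phi b`_(k - i)).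
rewrite /tmul coef_sum.
transitivity (\sum_(i < size a) G i).
  apply: eq_bigr => i _; rewrite inner -scalerAl coefZ coefXnM coef_poly /G.
  case: ltnP => // _; case: ltnP => // h.
  by rewrite [b`_(k - i)]nth_default // iter0'.
rewrite (@widen_sum _ (size a) (size a + k.+1) G (leq_addr _ _)); last first.
  by move=> i hi; rewrite /G nth_default // mul0r.
transitivity (\sum_(i < k.+1) G i); last first.
  by apply: eq_bigr => i _; rewrite /G ltnNge -ltnS ltn_ord.
rewrite (@widen_sum _ k.+1 (size a + k.+1) G (leq_addl _ _)) //.
by move=> i hi; rewrite /G hi mulr0.
Qed.

Lemma convD (K : fieldType) (psi : K -> K) p q :
  (forall x y, psi (x + y) = psi x + psi y) ->
  conv psi (p + q) = conv psi p + conv psi q.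
Proof. by move=> gD; apply/polyP => i; rewrite coefD !coef_conv // coefD iterD'. Qed.

Lemma conv0 (K : fieldType) (psi : K -> K) :
  (forall x y, psi (x + y) = psi x + psi y) -> conv psi 0 = 0.
Proof. by move=> gD; apply/polyP => i; rewrite coef_conv // !coef0 iter0'. Qed.

Lemma convN (K : fieldType) (psi : K -> K) p :
  (forall x y, psi (x + y) = psi x + psi y) -> conv psi (- p) = - conv psi p.
Proof. by move=> gD; apply/polyP => i; rewrite coefN !coef_conv // coefN iterN'. Qed.

Lemma conv_sum (K : fieldType) (psi : K -> K) (I : Type) (r : seq I) (P : pred I) F :
  (forall x y, psi (x + y) = psi x + psi y) ->
  conv psi (\sum_(i <- r | P i) F i) = \sum_(i <- r | P i) conv psi (F i).
Proof.
move=> gD; apply: (big_morph (conv psi)); [by move=> x y; apply: convD | by apply: conv0].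
Qed.

Lemma convCM (K : fieldType) (psi : K -> K) c p :
  (forall x y, psi (x + y) = psi x + psi y) ->
  (forall x y, psi (x * y) = psi x * psi y) -> psi c = c ->
  conv psi (c%:P * p) = c%:P * conv psi p.
Proof.
move=> gD gM gc; apply/polyP => i.
by rewrite coefCM !coef_conv // coefCM iterM' // iter_fix.
Qed.

Lemma convK (K : fieldType) (phi psi : K -> K) :
  pairP phi psi -> cancel (conv psi) (conv phi).
Proof.
case=> psD psM phD phM psK phK p; apply/polyP => i.
by rewrite !coef_conv // iterK'.
Qed.

Lemma tmul_anti (K : fieldType) (phi psi : K -> K) a b :
  pairP phi psi -> conv psi (tmul phi a b) = tmul psi (conv psi b) (conv psi a).
Proof.
move=> H; have [psD psM phD phM psK phK] := H.
apply/polyP => k; rewrite coef_conv // !coef_tmul // iter_sum //.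
rewrite (reindex_inj rev_ord_inj) /=; apply: eq_bigr => i _.
have hi : (i <= k)%N by rewrite -ltnS ltn_ord.
rewrite subSS !coef_conv // iterM' // iter_comp ?leq_subr // (subKn hi) mulrC.
by congr (_ * _); rewrite -iterD subnKC.
Qed.

Lemma tmul0l (K : fieldType) (phi : K -> K) b : tmul phi 0 b = 0.
Proof. by rewrite /tmul size_poly0 big_ord0. Qed.

Lemma tmul0r (K : fieldType) (phi : K -> K) a : tmul phi a 0 = 0.
Proof. by rewrite /tmul size_poly0 big1 // => i _; rewrite big_ord0. Qed.

Lemma tmulNl (K : fieldType) (phi : K -> K) a b :
  (forall x y, phi (x + y) = phi x + phi y) -> tmul phi (- a) b = - tmul phi a b.
Proof.
move=> gD; apply/polyP => k; rewrite coefN !coef_tmul // -sumrN.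
by apply: eq_bigr => i _; rewrite coefN mulNr.
Qed.

Lemma tmulNr (K : fieldType) (phi : K -> K) a b :
  (forall x y, phi (x + y) = phi x + phi y) -> tmul phi a (- b) = - tmul phi a b.
Proof.
move=> gD; apply/polyP => k; rewrite coefN !coef_tmul // -sumrN.
by apply: eq_bigr => i _; rewrite coefN iterN' // mulrN.
Qed.

Definition cmx (K : fieldType) (psi : K -> K) m n (A : 'M[{poly K}]_(m, n)) : 'M[{poly K}]_(n, m) :=
  (map_mx (conv psi) A)^T.

Lemma cmx_tmulmx (K : fieldType) (phi psi : K -> K) m n p
  (A : 'M[{poly K}]_(m, n)) (B : 'M[{poly K}]_(n, p)) :
  pairP phi psi -> cmx psi (tmulmx phi A B) = tmulmx psi (cmx psi B) (cmx psi A).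
Proof.
move=> H; have [psD psM phD phM psK phK] := H.
apply/matrixP => i k; rewrite /cmx !mxE conv_sum //; apply: eq_bigr => j _.
by rewrite !mxE tmul_anti.
Qed.

Lemma cmxD (K : fieldType) (psi : K -> K) m n (A B : 'M[{poly K}]_(m, n)) :
  (forall x y, psi (x + y) = psi x + psi y) -> cmx psi (A + B) = cmx psi A + cmx psi B.
Proof. by move=> gD; apply/matrixP => i j; rewrite !mxE convD. Qed.

Lemma cmxN (K : fieldType) (psi : K -> K) m n (A : 'M[{poly K}]_(m, n)) :
  (forall x y, psi (x + y) = psi x + psi y) -> cmx psi (- A) = - cmx psi A.
Proof. by move=> gD; apply/matrixP => i j; rewrite !mxE convN. Qed.

Lemma cmxB (K : fieldType) (psi : K -> K) m n (A B : 'M[{poly K}]_(m, n)) :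
  (forall x y, psi (x + y) = psi x + psi y) -> cmx psi (A - B) = cmx psi A - cmx psi B.
Proof. by move=> gD; rewrite cmxD // cmxN. Qed.

Lemma cmx0 (K : fieldType) (psi : K -> K) m n :
  (forall x y, psi (x + y) = psi x + psi y) -> cmx psi (0 : 'M[{poly K}]_(m, n)) = 0.
Proof. by move=> gD; apply/matrixP => i j; rewrite !mxE conv0. Qed.

Lemma cmxZ (K : fieldType) (psi : K -> K) m n c (A : 'M[{poly K}]_(m, n)) :
  (forall x y, psi (x + y) = psi x + psi y) ->
  (forall x y, psi (x * y) = psi x * psi y) -> psi c = c ->
  cmx psi (c%:P *: A) = c%:P *: cmx psi A.
Proof. by move=> gD gM gc; apply/matrixP => i j; rewrite !mxE convCM. Qed.

Lemma cmxK (K : fieldType) (phi psi : K -> K) m n :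
  pairP phi psi -> cancel (@cmx K psi m n) (@cmx K phi n m).
Proof. by move=> H A; apply/matrixP => i j; rewrite !mxE (convK H). Qed.

Lemma tmulmx0l (K : fieldType) (phi : K -> K) m n p (B : 'M[{poly K}]_(n, p)) :
  tmulmx phi (0 : 'M_(m, n)) B = 0.
Proof. by apply/matrixP => i k; rewrite !mxE big1 // => j _; rewrite mxE tmul0l. Qed.

Lemma tmulmx0r (K : fieldType) (phi : K -> K) m n p (A : 'M[{poly K}]_(m, n)) :
  tmulmx phi A (0 : 'M_(n, p)) = 0.
Proof. by apply/matrixP => i k; rewrite !mxE big1 // => j _; rewrite mxE tmul0r. Qed.

Lemma tmulmxNl (K : fieldType) (phi : K -> K) m n p (A : 'M[{poly K}]_(m, n)) (B : 'M_(n, p)) :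
  (forall x y, phi (x + y) = phi x + phi y) -> tmulmx phi (- A) B = - tmulmx phi A B.
Proof.
move=> gD; apply/matrixP => i k; rewrite !mxE -sumrN; apply: eq_bigr => j _.
by rewrite mxE tmulNl.
Qed.

Lemma tmulmxNr (K : fieldType) (phi : K -> K) m n p (A : 'M[{poly K}]_(m, n)) (B : 'M_(n, p)) :
  (forall x y, phi (x + y) = phi x + phi y) -> tmulmx phi A (- B) = - tmulmx phi A B.
Proof.
move=> gD; apply/matrixP => i k; rewrite !mxE -sumrN; apply: eq_bigr => j _.
by rewrite mxE tmulNr.
Qed.

Lemma der_cmx (Fq : finFieldType) (K : fieldType) (f : {rmorphism Fq -> K})
  (phi psi : K -> K) (H : pairP phi psi) (hf : forall c, psi (f c) = f c) d e
  (Phi1 : {poly Fq} -> 'M[{poly K}]_d) (Psi1 : {poly Fq} -> 'M[{poly K}]_e)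
  (Phi2 : {poly Fq} -> 'M[{poly K}]_e) (Psi2 : {poly Fq} -> 'M[{poly K}]_d) :
  (forall a, Phi2 a = cmx psi (Psi1 a)) -> (forall a, Psi2 a = cmx psi (Phi1 a)) ->
  forall delta, is_der f phi Phi1 Psi1 delta ->
    is_der f psi Phi2 Psi2 (fun a => cmx psi (delta a)).
Proof.
have [psD psM phD phM psK phK] := H.
move=> e1 e2 delta [hl hm]; split.
  by move=> c a b /=; rewrite hl cmxD // cmxZ.
by move=> a b /=; rewrite mulrC hm cmxD // !cmx_tmulmx // !e1 !e2 addrC.
Qed.

Lemma zmod_aux (V : zmodType) (W X Y Z : V) : W + X = Y + Z -> X - Y = Z - W.
Proof.
move=> h; rewrite -(addKr W X) h [Y + Z]addrC addrA [- W + Z]addrC addrK //.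
Qed.

Lemma inner_mod (Fq : finFieldType) (K : fieldType) (f : {rmorphism Fq -> K})
  (phi : K -> K) d e
  (Phi : {poly Fq} -> 'M[{poly K}]_d) (Psi : {poly Fq} -> 'M[{poly K}]_e) delta c :
  is_der f phi Phi Psi delta ->
  is_inner phi Phi Psi (fun a => tmulmx phi (delta a) (Phi c) - tmulmx phi (Psi c) (delta a)).
Proof.
move=> [_ hm]; exists (delta c) => a.
apply: zmod_aux; rewrite -hm -hm mulrC //.
Qed.

Lemma sigma_cmx (Fq : finFieldType) (K : fieldType) q d (Phi : {poly Fq} -> 'M[{poly K}]_d) a :
  sigma_mod q Phi a = cmx (frobinv q) (Phi a).
Proof. by []. Qed.
Lemma frob_pair (Fq : finFieldType) (K : fieldType) (f : {rmorphism Fq -> K}) :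
  perfect_field K ->
  pairP (frob #|Fq| (K:=K)) (frobinv #|Fq| (K:=K)) /\
  (forall c, frob #|Fq| (f c) = f c) /\ (forall c, frobinv #|Fq| (f c) = f c).
Proof.
move=> perf.
have [p pr_p pc] := finPcharP Fq.
have pK : p \in [pchar K] by exact: rmorph_pchar pc.
set n := logn p #|Fq|.
have cq : #|Fq| = (p ^ n)%N by have := card_pprimeChar pc.
have qnat : [pchar K].-nat #|Fq| by rewrite cq pnatX (pnatE _ pr_p) pK.
have fD (x y : K) : frob #|Fq| (x + y) = frob #|Fq| x + frob #|Fq| y.
  by rewrite /frob (exprDn_pchar _ _ qnat).
have fM (x y : K) : frob #|Fq| (x * y) = frob #|Fq| x * frob #|Fq| y.
  by rewrite /frob exprMn.
have fI : injective (frob #|Fq| (K:=K)).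
  move=> x y e; apply/eqP; rewrite -subr_eq0.
  have : frob #|Fq| (x - y) = 0.
    have := fD (x - y) y; rewrite subrK e => h.
    by apply: (@addIr _ (frob #|Fq| y)); rewrite -h add0r.
  by rewrite /frob => /eqP; rewrite expf_eq0 => /andP[].
have roots (y : K) : exists x, frob #|Fq| x = y.
  rewrite /frob cq; clear qnat cq; elim: n y => [|m IH] y; first by exists y; rewrite expr1.
  have [z hz] := IH y; have [x hx] := perf p pK z.
  by exists x; rewrite expnS exprM hx.
have fK : cancel (frobinv #|Fq| (K:=K)) (frob #|Fq| (K:=K)).
  move=> y; rewrite /frobinv /frob.
  exact: (epsilon_spec (inhabits (0:K)) (fun x : K => x ^+ #|Fq| = y) (roots y)).
have iK : cancel (frob #|Fq| (K:=K)) (frobinv #|Fq| (K:=K)).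
  by move=> x; apply: fI; rewrite fK.
have ff c : frob #|Fq| (f c) = f c by rewrite /frob -rmorphXn expf_card.
split; last split => // c.
  split => // x y; apply: fI; rewrite ?fD ?fM !fK //.
by apply: fI; rewrite fK ff.
Qed.

Theorem theorem7p3 (Fq : finFieldType) (K : fieldType) (f : {rmorphism Fq -> K})
  (theta : K) (d e : nat)
  (Phi : {poly Fq} -> 'M[{poly K}]_d) (Psi : {poly Fq} -> 'M[{poly K}]_e) :
  perfect_field K ->
  is_tmodule f (frob #|Fq|) theta Phi ->
  is_tmodule f (frob #|Fq|) theta Psi ->
  exists F : ({poly Fq} -> 'M[{poly K}]_(e, d)) -> ({poly Fq} -> 'M[{poly K}]_(d, e)),
    ext_iso f (frob #|Fq|) Phi Psi
              (frobinv #|Fq|) (sigma_mod #|Fq| Psi) (sigma_mod #|Fq| Phi) F.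
Proof.
move=> perf _ _.
have [H [hphi hpsi]] := frob_pair f perf.
set phi := frob #|Fq| in H hphi *; set psi := frobinv #|Fq| in H hpsi *.
have [psD psM phD phM psK phK] := H.
have H' := pair_sym H.
exists (fun delta a => cmx psi (delta a)); split.
- move=> delta hd.
  by apply: (der_cmx H hpsi _ _ hd) => a; rewrite sigma_cmx.
- move=> d1 d2 h1 h2; exists 0 => a /=.
  by rewrite tmulmx0l tmulmx0r subrr cmxD // (addrC (cmx psi (d1 a))) addrK subrr.
- move=> c delta hd.
  have hd' := der_cmx H hpsi (fun a => sigma_cmx _ _ _) (fun a => sigma_cmx _ _ _) hd.
  have [U hU] := inner_mod c hd'.
  by exists U => a; rewrite -hU /= cmx_tmulmx // sigma_cmx.
- move=> delta hd; split.
  + case=> V hV; exists (- cmx phi V) => a.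
    rewrite -[delta a](cmxK H) hV cmxB // !cmx_tmulmx // !sigma_cmx !(cmxK H).
    by rewrite tmulmxNl // tmulmxNr // opprK addrC.
  + case=> U hU; exists (- cmx psi U) => a.
    by rewrite hU cmxB // !cmx_tmulmx // !sigma_cmx tmulmxNl // tmulmxNr // opprK addrC.
- move=> eta he; exists (fun a => cmx phi (eta a)); split.
    apply: (der_cmx H' hphi _ _ he) => a; by rewrite sigma_cmx (cmxK H).
  by exists 0 => a; rewrite (cmxK H') tmulmx0l tmulmx0r !subrr.
Qed.
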